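(* Let $0\le\alpha<\tfrac12$ and let $D$ be a distribution on $\{0,1\}^n$ given by a tree BN (every node has at most one parent and the underlying graph is a rooted tree) with all conditional probabilities in $(0,1)$ that is $\alpha$-difference bounded. Then every conjunction $f$ of $d$ literals satisfies $$L_1(f)\le\left(\frac{2-2\alpha}{1-2\alpha}\right)^{2d}.$$
   Context: For a BN with parent sets $\operatorname{pa}(v)$, let $\mu_{v,x_{\operatorname{pa}(v)}}=P(X_v=1\mid X_{\operatorname{pa}(v)}=x_{\operatorname{pa}(v)})$ and $\sigma_{v,x_{\operatorname{pa}(v)}}=\sqrt{\mu_{v,x_{\operatorname{pa}(v)}}(1-\mu_{v,x_{\operatorname{pa}(v)}})}$. The BN is $\alpha$-difference bounded if for every $v$ and every two assignments $x,y$ to $\operatorname{pa}(v)$, $|\mu_{v,x}-\mu_{v,y}|\le\alpha$ and $|\sigma_{v,x}-\sigma_{v,y}|\le\alpha$. The BN-induced basis is $\phi_v(x)=(x_v-\mu_{v,x_{\operatorname{pa}(v)}})/\sigma_{v,x_{\operatorname{pa}(v)}}$, $\phi_S=\prod_{v\in S}\phi_v$; $\hat f_S=\mathbb{E}_D[f(X)\phi_S(X)]$; $L_1(f)=\sum_{S\subseteq[n]}|\hat f_S|$. A conjunction of $d$ literals is $f(x)=\prod_{i\in T_1}x_i\prod_{j\in T_0}(1-x_j)$ with $T_0,T_1$ disjoint and $|T_0\cup T_1|=d$. *)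

(* Defs.v *)
From mathcomp Require Import all_boot all_order all_algebra.
Set Implicit Arguments. Unset Strict Implicit. Unset Printing Implicit Defensive.
Import Order.TTheory GRing.Theory Num.Theory.
Local Open Scope ring_scope.

(* A Bayesian network over n binary variables with at most one parent per node.
   par v = Some p : p is the parent of v; par v = None : v has no parent.
   q v b = P(X_v = 1 | X_{par v} = b); for a parentless node only q v false is used. *)
Section BN.
Variables (R : rcfType) (n : nat).
Variable par : 'I_n -> option 'I_n.
Variable q : 'I_n -> bool -> R.

Definition assignment := {ffun 'I_n -> bool}.

Definition bn_mu (v : 'I_n) (x : assignment) : R :=
  match par v with Some p => q v (x p) | None => q v false end.

Definition bn_sigma (v : 'I_n) (x : assignment) : R :=
  Num.sqrt (bn_mu v x * (1 - bn_mu v x)).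

Definition bn_prob (x : assignment) : R :=
  \prod_(v < n) (if x v then bn_mu v x else 1 - bn_mu v x).

Definition bn_phi (v : 'I_n) (x : assignment) : R :=
  (((x v : nat)%:R) - bn_mu v x) / bn_sigma v x.

Definition bn_phiS (S : {set 'I_n}) (x : assignment) : R :=
  \prod_(v in S) bn_phi v x.

Definition bn_coef (f : assignment -> R) (S : {set 'I_n}) : R :=
  \sum_(x : assignment) bn_prob x * (f x * bn_phiS S x).

Definition bn_L1 (f : assignment -> R) : R :=
  \sum_(S : {set 'I_n}) `|bn_coef f S|.

Definition parent_step (u : 'I_n) : 'I_n := odflt u (par u).

Definition is_rooted_tree : Prop :=
  exists r : 'I_n,
    par r = None /\
    (forall v, par v = None -> v = r) /\
    (forall v, exists k : nat, iter k parent_step v = r).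

Definition cond_probs_open : Prop :=
  forall v x, 0 < bn_mu v x /\ bn_mu v x < 1.

Definition diff_bounded (alpha : R) : Prop :=
  forall v (x y : assignment),
    `|bn_mu v x - bn_mu v y| <= alpha /\ `|bn_sigma v x - bn_sigma v y| <= alpha.
End BN.

Definition conjunction (R : rcfType) (n : nat) (T0 T1 : {set 'I_n})
  (x : {ffun 'I_n -> bool}) : R :=
  (\prod_(i in T1) ((x i : nat)%:R)) * \prod_(j in T0) (1 - ((x j : nat)%:R)).

(* Main.v *)
Require Import Defs.
From mathcomp Require Import all_boot all_order all_algebra.
From mathcomp Require Import ring lra.
Import Order.TTheory GRing.Theory Num.Theory.
Local Open Scope ring_scope.
Set Implicit Arguments. Unset Strict Implicit. Unset Printing Implicit Defensive.

Section Aux.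
Variables (R : rcfType) (n : nat) (par : 'I_n -> option 'I_n) (q : 'I_n -> bool -> R).
Local Notation asg := {ffun 'I_n -> bool}.

Definition Pf v (x : asg) : R :=
  if x v then bn_mu par q v x else 1 - bn_mu par q v x.
Definition fac (A S : {set 'I_n}) (psi : 'I_n -> bool -> R) v (x : asg) : R :=
  if v \in A then Pf v x * psi v (x v) * (if v \in S then bn_phi par q v x else 1)
  else 2^-1.
Definition coef (A : {set 'I_n}) psi (c : R) (S : {set 'I_n}) := \sum_(x : asg) c * \prod_(v < n) fac A S psi v x.
Definition GG (A : {set 'I_n}) psi (c : R) := \sum_(S : {set 'I_n} | S \subset A) `|coef A psi c S|.
Definition tog (l : 'I_n) (x : asg) : asg := [ffun i => if i == l then ~~ x l else x i].

Lemma tog_inv l : involutive (tog l).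
Proof.
move=> x; apply/ffunP => i; rewrite /tog !ffunE eqxx negbK.
by case: eqP => [->|].
Qed.

Lemma toggle_sum l (Rf Hf Kf : asg -> R) :
  (forall x, Rf (tog l x) = Rf x) -> (forall x, Hf x + Hf (tog l x) = Kf x) ->
  \sum_x Rf x * Hf x = \sum_x Rf x * Kf x / 2.
Proof.
move=> HR HK.
have E : \sum_x Rf x * Hf x = \sum_x Rf x * Hf (tog l x).
  rewrite (reindex_inj (inv_inj (tog_inv l))) /=.
  by apply: eq_bigr => x _; rewrite HR.
have -> : \sum_x Rf x * Kf x / 2 = (\sum_x Rf x * Hf x + \sum_x Rf x * Hf x) / 2.
  rewrite [in X in (_ + X)]E -big_split /= mulr_suml.
  by apply: eq_bigr => x _; rewrite -HK mulrDr.
by field.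
Qed.

Lemma mu_tog l v x : par v != Some l -> bn_mu par q v (tog l x) = bn_mu par q v x.
Proof.
rewrite /bn_mu; case: (par v) => [p|] //= H; rewrite ffunE.
by case: eqP => // E; move: H; rewrite E eqxx.
Qed.

Lemma fac_tog (A S : {set 'I_n}) psi l v x : v != l -> (v \in A -> par v != Some l) ->
  fac A S psi v (tog l x) = fac A S psi v x.
Proof.
move=> vl H; rewrite /fac; case: ifP => vA //.
by rewrite /Pf /bn_phi /bn_sigma mu_tog ?H // ffunE (negbTE vl).
Qed.

Lemma coef_elim (A A' S S' : {set 'I_n}) psi psi' c c' l (K : asg -> R) :
  l \in A -> l \notin A' -> (forall u, u \in A -> par u != Some l) ->
  (forall x, fac A S psi l x + fac A S psi l (tog l x) = K x) ->
  (forall x, c' * \prod_(v < n | v != l) fac A' S' psi' v x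
             = c * (\prod_(v < n | v != l) fac A S psi v x) * K x) ->
  coef A psi c S = coef A' psi' c' S'.
Proof.
move=> lA lA' Hleaf HK Hprod; rewrite /coef.
have -> : \sum_x c * \prod_(v < n) fac A S psi v x =
   \sum_x (c * \prod_(v < n | v != l) fac A S psi v x) * fac A S psi l x.
  by apply: eq_bigr => x _; rewrite (bigD1 l) //=; ring.
rewrite (@toggle_sum l (fun x => c * \prod_(v < n | v != l) fac A S psi v x) (fac A S psi l) K) //; last first.
  move=> x /=; congr (_ * _); apply: eq_bigr => v vl; apply: fac_tog => //.
  by move=> vA; apply: Hleaf.
apply: eq_bigr => x _; rewrite -Hprod [in RHS](bigD1 l) //=.
have -> : fac A' S' psi' l x = 2^-1 by rewrite /fac (negbTE lA').
by ring.
Qed.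

Definition msgE (g : bool -> R) (m : R) := (1 - m) * g false + m * g true.
Definition msgD (g : bool -> R) (m : R) := Num.sqrt (m * (1 - m)) * (g true - g false).

Lemma phi_alg (m s a b : R) : s != 0 -> s ^+ 2 = m * (1 - m) ->
  m * a * ((1 - m) / s) + (1 - m) * b * ((0 - m) / s) = s * (a - b).
Proof.
move=> s0 s2.
have -> : m * a * ((1 - m) / s) + (1 - m) * b * ((0 - m) / s) = s ^+ 2 * (a - b) / s.
  by rewrite s2; field.
by field.
Qed.

Lemma Hsum_E (A S : {set 'I_n}) psi l x : l \in A -> l \notin S -> par l != Some l ->
  fac A S psi l x + fac A S psi l (tog l x) = msgE (psi l) (bn_mu par q l x).
Proof.
move=> lA lS pl; rewrite /fac lA (negbTE lS) /Pf mu_tog // ffunE eqxx /msgE.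
by case: (x l) => /=; ring.
Qed.

Lemma Hsum_D (A S : {set 'I_n}) psi l x : l \in A -> par l != Some l ->
  0 < bn_mu par q l x < 1 ->
  fac A (l |: S) psi l x + fac A (l |: S) psi l (tog l x) = msgD (psi l) (bn_mu par q l x).
Proof.
move=> lA pl /andP [m0 m1].
rewrite /fac lA setU11 /Pf /bn_phi /bn_sigma mu_tog // ffunE eqxx /msgD.
set m := bn_mu par q l x.
have mm : 0 < m * (1 - m) by apply: mulr_gt0 => //; rewrite subr_gt0.
have s0 : Num.sqrt (m * (1 - m)) != 0 by rewrite gt_eqF // sqrtr_gt0.
have s2 := sqr_sqrtr (ltW mm).
case: (x l) => /=; rewrite ?mulr1n ?mulr0n.
  by rewrite phi_alg.
by rewrite addrC phi_alg.
Qed.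

Definition upd (psi : 'I_n -> bool -> R) p (m : bool -> R) :=
  fun v => if v == p then (fun b => psi p b * m b) else psi v.

Lemma prod_upd (A S1 S2 : {set 'I_n}) psi p l m x : p \in A -> p != l ->
  (forall v, v != l -> (v \in S1) = (v \in S2)) ->
  \prod_(v < n | v != l) fac (A :\ l) S2 (upd psi p m) v x
  = (\prod_(v < n | v != l) fac A S1 psi v x) * m (x p).
Proof.
move=> pA pl HS; rewrite (bigD1 p) //= [in RHS](bigD1 p) //=.
have -> : fac (A :\ l) S2 (upd psi p m) p x = fac A S1 psi p x * m (x p).
  by rewrite /fac /upd in_setD1 pl pA eqxx /= -(HS p pl) mulrA [RHS]mulrAC.
rewrite (eq_bigr (fac A S1 psi ^~ x)); first by ring.
by move=> v /andP [vl vp]; rewrite /fac /upd in_setD1 vl (negbTE vp) /= (HS v vl).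
Qed.

Lemma prod_same (A S1 S2 : {set 'I_n}) psi l x :
  (forall v, v != l -> (v \in S1) = (v \in S2)) ->
  \prod_(v < n | v != l) fac (A :\ l) S2 psi v x = \prod_(v < n | v != l) fac A S1 psi v x.
Proof. by move=> HS; apply: eq_bigr => v vl; rewrite /fac in_setD1 vl /= (HS v vl). Qed.

Lemma sum_split (F : {set 'I_n} -> R) (A : {set 'I_n}) l : l \in A ->
  \sum_(S : {set 'I_n} | S \subset A) F S = \sum_(S : {set 'I_n} | S \subset A :\ l) (F S + F (l |: S)).
Proof.
move=> lA; rewrite big_split /= [LHS](bigID (fun S : {set 'I_n} => l \in S)) /= addrC; congr (_ + _).
  by apply: eq_bigl => S; rewrite subsetD1.
rewrite (reindex_onto (fun S => l |: S) (fun S => S :\ l)) /=; last first.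
  by move=> S /andP [_ lS]; rewrite setD1K.
apply: eq_bigl => S; rewrite setU11 andbT subsetD1 subUset sub1set lA /=.
case lS: (l \in S) => /=; last by rewrite setU1K ?lS // eqxx.
rewrite andbF; apply/negbTE; apply/negP => /andP [_ /eqP E].
by move: lS; rewrite -E !inE eqxx.
Qed.

Lemma GG_some (A : {set 'I_n}) psi c l p : l \in A ->
  (forall u, u \in A -> par u != Some l) -> par l = Some p -> p \in A -> p != l ->
  (forall b, 0 < q l b < 1) ->
  GG A psi c = GG (A :\ l) (upd psi p (fun b => msgE (psi l) (q l b))) c
             + GG (A :\ l) (upd psi p (fun b => msgD (psi l) (q l b))) c.
Proof.
move=> lA Hleaf Hp pA pl Hq.
have pll : par l != Some l by rewrite Hp; apply/eqP => -[E]; move: pl; rewrite E eqxx.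
rewrite /GG (sum_split _ lA) -big_split /=; apply: eq_bigr => S SA.
have lS : l \notin S by move: SA; rewrite subsetD1 => /andP [].
have lA' : l \notin A :\ l by rewrite !inE eqxx.
congr (_ + _); congr (Num.norm _).
  apply: (coef_elim (l := l) (K := fun x => msgE (psi l) (bn_mu par q l x))) => //.
    by move=> x; apply: Hsum_E.
  by move=> x; rewrite (prod_upd (S1 := S)) // /bn_mu Hp; ring.
apply: (coef_elim (l := l) (K := fun x => msgD (psi l) (bn_mu par q l x))) => //.
  by move=> x; apply: Hsum_D => //; rewrite /bn_mu Hp.
move=> x; rewrite (prod_upd (S1 := l |: S)) // ?/bn_mu ?Hp; first by ring.
by move=> v vl; rewrite in_setU1 (negbTE vl).
Qed.

Lemma GG_none (A : {set 'I_n}) psi c l : l \in A ->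
  (forall u, u \in A -> par u != Some l) -> par l = None ->
  (0 < q l false < 1) ->
  GG A psi c = GG (A :\ l) psi (c * msgE (psi l) (q l false))
             + GG (A :\ l) psi (c * msgD (psi l) (q l false)).
Proof.
move=> lA Hleaf Hp Hq.
have pll : par l != Some l by rewrite Hp.
rewrite /GG (sum_split _ lA) -big_split /=; apply: eq_bigr => S SA.
have lS : l \notin S by move: SA; rewrite subsetD1 => /andP [].
have lA' : l \notin A :\ l by rewrite !inE eqxx.
congr (_ + _); congr (Num.norm _).
  apply: (coef_elim (l := l) (K := fun x => msgE (psi l) (bn_mu par q l x))) => //.
    by move=> x; apply: Hsum_E.
  by move=> x; rewrite (@prod_same A S S psi l x) // /bn_mu Hp; ring.
apply: (coef_elim (l := l) (K := fun x => msgD (psi l) (bn_mu par q l x))) => //.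
  by move=> x; apply: Hsum_D => //; rewrite /bn_mu Hp.
move=> x; rewrite (@prod_same A (l |: S) S psi l x) // ?/bn_mu ?Hp; first by ring.
by move=> v vl; rewrite in_setU1 (negbTE vl).
Qed.

End Aux.

Section Norm.
Variable (R : rcfType) (alpha : R).

Definition tt := (2 - 4 * alpha)^-1.
Definition NN (g : bool -> R) := Num.max `|g false| `|g true| + tt * `|g true - g false|.

Lemma tt_gt0 (ha1 : alpha < 2^-1) : 0 < tt.
Proof. rewrite /tt invr_gt0. lra. Qed.

Lemma tt_eq (ha1 : alpha < 2^-1) (D : R) : tt * D = D / 2 + 2 * (tt * alpha * D).
Proof.
have h0 : 0 < 2 - 4 * alpha by lra.
have h : 2 - 4 * alpha != 0 by rewrite gt_eqF.
by rewrite /tt; field.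
Qed.

Lemma NN_ge0 (ha1 : alpha < 2^-1) g : 0 <= NN g.
Proof.
rewrite /NN addr_ge0 //; last by rewrite mulr_ge0 // ltW // (tt_gt0 ha1).
by rewrite le_max normr_ge0.
Qed.

Lemma NN_const a : NN (fun _ => a) = `|a|.
Proof. by rewrite /NN maxxx subrr normr0 mulr0 addr0. Qed.

Lemma my_max_l (x y : R) : x <= Num.max x y. Proof. by rewrite le_max lexx. Qed.
Lemma my_max_r (x y : R) : y <= Num.max x y. Proof. by rewrite le_max lexx orbT. Qed.

Lemma NN_mul (ha1 : alpha < 2^-1) f g : NN (fun b => f b * g b) <= NN f * NN g.
Proof.
rewrite /NN.
set Mf := Num.max `|f false| `|f true|; set Mg := Num.max `|g false| _.
set Df := `|f true - f false|; set Dg := `|g true - g false|.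
have t0 := ltW (tt_gt0 ha1).
have Mf0 : 0 <= Mf by rewrite le_max normr_ge0.
have Mg0 : 0 <= Mg by rewrite le_max normr_ge0.
have Df0 : 0 <= Df by rewrite normr_ge0.
have Dg0 : 0 <= Dg by rewrite normr_ge0.
have h1 : Num.max `|f false * g false| `|f true * g true| <= Mf * Mg.
  by rewrite ge_max !normrM; apply/andP; split; apply: ler_pM => //;
     rewrite ?normr_ge0 ?my_max_l ?my_max_r.
have h2 : `|f true * g true - f false * g false| <= Df * Mg + Mf * Dg.
  have -> : f true * g true - f false * g false
     = (f true - f false) * g true + f false * (g true - g false) by ring.
  apply: (le_trans (ler_normD _ _)); rewrite !normrM; apply: lerD.
    by apply: ler_pM => //; rewrite ?normr_ge0 ?my_max_r.
  by apply: ler_pM => //; rewrite ?normr_ge0 ?my_max_l.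
have h3 : tt * `|f true * g true - f false * g false| <= tt * (Df * Mg + Mf * Dg).
  by apply: ler_wpM2l.
have h4 : 0 <= tt * tt * Df * Dg by rewrite !mulr_ge0.
lra.
Qed.

Definition sq (m : R) := Num.sqrt (m * (1 - m)).

Lemma sq_bound m : 0 < m < 1 -> 0 <= sq m <= 2^-1.
Proof.
move=> /andP [m0 m1]; rewrite /sq sqrtr_ge0 /=.
have mm : 0 <= m * (1 - m) by apply: mulr_ge0; lra.
have s2 := sqr_sqrtr mm.
have s0 := sqrtr_ge0 (m * (1 - m)).
move: s2 s0; set s := Num.sqrt _ => s2 s0.
have : s ^+ 2 <= 4^-1 by rewrite s2; have := sqr_ge0 (m - 2^-1); nra.
by move=> h; nra.
Qed.

Lemma convex_bound (m a b : R) : 0 < m < 1 ->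
  `|(1 - m) * a + m * b| <= Num.max `|a| `|b|.
Proof.
move=> /andP [m0 m1].
apply: (le_trans (ler_normD _ _)); rewrite !normrM (ger0_norm (ltW m0)).
rewrite ger0_norm; last lra.
have ha := my_max_l `|a| `|b|; have hb := my_max_r `|a| `|b|.
have : (1 - m) * `|a| <= (1 - m) * Num.max `|a| `|b| by apply: ler_wpM2l => //; lra.
have : m * `|b| <= m * Num.max `|a| `|b| by apply: ler_wpM2l => //; lra.
lra.
Qed.

Lemma NN_msg (ha0 : 0 <= alpha) (ha1 : alpha < 2^-1) (m : bool -> R) (g : bool -> R) :
  (forall b, 0 < m b < 1) -> `|m true - m false| <= alpha ->
  `|sq (m true) - sq (m false)| <= alpha ->
  NN (fun b => msgE g (m b)) + NN (fun b => msgD g (m b)) <= NN g.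
Proof.
move=> hm h1 h2; rewrite /NN /msgE /msgD -/(sq (m true)) -/(sq (m false)).
set M := Num.max `|g false| `|g true|; set D := `|g true - g false|.
have t0 := ltW (tt_gt0 ha1).
have D0 : 0 <= D by rewrite normr_ge0.
have hE : Num.max `|(1 - m false) * g false + m false * g true|
                  `|(1 - m true) * g false + m true * g true| <= M.
  by rewrite ge_max !convex_bound.
have hE1 : `|(1 - m true) * g false + m true * g true
             - ((1 - m false) * g false + m false * g false * 0 + m false * g true)| <= alpha * D.
  have -> : (1 - m true) * g false + m true * g true
             - ((1 - m false) * g false + m false * g false * 0 + m false * g true)
           = (m true - m false) * (g true - g false) by ring.
  by rewrite normrM; apply: ler_wpM2r.
rewrite mulr0 addr0 in hE1.
have hD : Num.max `|sq (m false) * (g true - g false)| `|sq (m true) * (g true - g false)|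
          <= 2^-1 * D.
  have hs : forall b, `|sq (m b)| <= 2^-1.
    by move=> b; case/andP: (sq_bound (hm b)) => s0 s1; rewrite ger0_norm.
  by rewrite ge_max !normrM; apply/andP; split; apply: ler_wpM2r.
have hD1 : `|sq (m true) * (g true - g false) - sq (m false) * (g true - g false)|
           <= alpha * D.
  by rewrite -mulrBl normrM; apply: ler_wpM2r.
have e1 : tt * `|(1 - m true) * g false + m true * g true
             - ((1 - m false) * g false + m false * g true)| <= tt * (alpha * D).
  by apply: ler_wpM2l.
have e2 : tt * `|sq (m true) * (g true - g false) - sq (m false) * (g true - g false)|
          <= tt * (alpha * D) by apply: ler_wpM2l.
have e3 := tt_eq ha1 D.
rewrite mulrA in e1 e2.
lra.
Qed.
End Norm.

Section Tree.
Variables (R : rcfType) (n : nat) (par : 'I_n -> option 'I_n) (q : 'I_n -> bool -> R).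

Definition anc_closed (A : {set 'I_n}) := forall v p, v \in A -> par v = Some p -> p \in A.

Lemma leaf_exists : is_rooted_tree par -> forall (A : {set 'I_n}) i0, i0 \in A ->
  exists2 l, l \in A & (forall u, u \in A -> par u != Some l) /\ par l != Some l.
Proof.
case=> r [hr [hu hk]] A i0 i0A.
have hk' : forall v, exists k, iter k (parent_step par) v == r.
  by move=> v; case: (hk v) => k e; exists k; rewrite e.
pose dep v := ex_minn (hk' v).
have dep_lt : forall u v, par u = Some v -> (dep v < dep u)%N.
  move=> u v puv; rewrite /dep.
  case: (ex_minnP (hk' u)) => ku Hku Hmu.
  case: (ex_minnP (hk' v)) => kv Hkv Hmv.
  case: ku Hku Hmu => [|k] Hku Hmu.
    by move/eqP: Hku => /= E; move: hr; rewrite -E puv.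
  by rewrite iterSr /parent_step puv /= in Hku; apply: Hmv.
case: (@arg_maxnP _ i0 (mem A) dep i0A) => l lA lmax.
exists l => //; split.
  move=> u uA; apply/eqP => pul; have := dep_lt _ _ pul; have := lmax u uA.
  by move=> h1 h2; have := leq_ltn_trans h1 h2; rewrite ltnn.
by apply/eqP => pll; have := dep_lt _ _ pll; rewrite ltnn.
Qed.

Lemma GG_bound alpha (ha0 : 0 <= alpha) (ha1 : alpha < 2^-1) :
  is_rooted_tree par -> cond_probs_open par q -> diff_bounded par q alpha ->
  forall k (A : {set 'I_n}), #|A| = k -> anc_closed A -> forall psi c,
  GG par q A psi c <= `|c| * \prod_(v in A) NN alpha (psi v).
Proof.
move=> Htree Hopen Hdiff.
elim=> [|k IH] A cA HA psi c.
  have A0 : A = set0 by apply/eqP; rewrite -cards_eq0 cA.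
  subst A; rewrite big_set0 mulr1 /GG.
  rewrite (eq_bigl (fun S => S == set0)) => [|S]; last by rewrite subset0.
  rewrite big_pred1_eq /coef.
  rewrite (eq_bigr (fun _ => c * (2^-1) ^+ n)); last first.
    move=> x _; rewrite (eq_bigr (fun _ => 2^-1)) ?prodr_const ?card_ord //.
    by move=> v _; rewrite /fac in_set0.
  rewrite sumr_const card_ffun card_bool card_ord.
  have -> : c * 2^-1 ^+ n *+ (2 ^ n)%N = c.
    rewrite -mulr_natr natrX -mulrA -exprMn mulVf ?expr1n ?mulr1 //.
    by rewrite pnatr_eq0.
  by [].
have [i0 i0A] : exists i0, i0 \in A by apply/card_gt0P; rewrite cA.
have [l lA [Hleaf pll]] := leaf_exists Htree i0A.
have cA' : #|A :\ l| = k by move: cA; rewrite (cardsD1 l) lA => -[].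
have HA' : anc_closed (A :\ l).
  move=> v p; rewrite !in_setD1 => /andP [vl vA] pvp; rewrite (HA v p vA pvp) andbT.
  by apply/eqP => E; move: (Hleaf v vA); rewrite pvp E eqxx.
rewrite (big_setD1 l lA) /=.
case Hp: (par l) => [p|].
  have pA : p \in A := HA l p lA Hp.
  have pl : p != l by apply/eqP => E; move: pll; rewrite Hp E eqxx.
  have Hq : forall b, 0 < q l b < 1.
    by move=> b; have := Hopen l [ffun => b]; rewrite /bn_mu Hp ffunE => -[h1 h2]; apply/andP.
  have Hd1 : `|q l true - q l false| <= alpha.
    by have [h _] := Hdiff l [ffun => true] [ffun => false]; move: h; rewrite /bn_mu Hp !ffunE.
  have Hd2 : `|sq (q l true) - sq (q l false)| <= alpha.
    by have [_ h] := Hdiff l [ffun => true] [ffun => false]; move: h; rewrite /bn_sigma /bn_mu Hp !ffunE.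
  rewrite (GG_some _ _ lA Hleaf Hp pA pl Hq).
  set mE := fun b => msgE (psi l) (q l b); set mD := fun b => msgD (psi l) (q l b).
  have pA' : p \in A :\ l by rewrite in_setD1 pl.
  have E1 : forall m, \prod_(v in A :\ l) NN alpha (upd psi p m v)
      = NN alpha (fun b => psi p b * m b) * \prod_(v in (A :\ l) :\ p) NN alpha (psi v).
    move=> m; rewrite (big_setD1 p pA') /= /upd eqxx; congr (_ * _).
    by apply: eq_bigr => v; rewrite in_setD1 => /andP [vp _]; rewrite (negbTE vp).
  have E2 : \prod_(v in A :\ l) NN alpha (psi v)
      = NN alpha (psi p) * \prod_(v in (A :\ l) :\ p) NN alpha (psi v).
    by rewrite (big_setD1 p pA').
  apply: le_trans (lerD (IH _ cA' HA' _ c) (IH _ cA' HA' _ c)) _.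
  rewrite !E1 E2; set P := \prod_(v in _ :\ p) _.
  have P0 : 0 <= P by apply: prodr_ge0 => v _; apply: NN_ge0.
  have hm1 := NN_mul ha1 (psi p) mE; have hm2 := NN_mul ha1 (psi p) mD.
  have hmsg := NN_msg ha0 ha1 (psi l) Hq Hd1 Hd2.
  have hp0 := NN_ge0 ha1 (psi p).
  rewrite -mulrDr; apply: ler_wpM2l => //; rewrite -mulrDl.
  apply: le_trans (_ : (NN alpha (psi p) * NN alpha mE + NN alpha (psi p) * NN alpha mD) * P <= _).
    by apply: ler_wpM2r => //; exact: lerD.
  rewrite -mulrDr mulrA [NN alpha (psi l) * _]mulrC; apply: ler_wpM2r => //.
  exact: ler_wpM2l.
have Hq0 : 0 < q l false < 1.
  by have := Hopen l [ffun => false]; rewrite /bn_mu Hp => -[h1 h2]; apply/andP.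
rewrite (GG_none _ _ lA Hleaf Hp Hq0).
apply: le_trans (lerD (IH _ cA' HA' _ _) (IH _ cA' HA' _ _)) _.
have := NN_msg ha0 ha1 (psi l) (m := fun _ => q l false) (fun _ => Hq0).
rewrite !subrr !normr0 => /(_ ha0 ha0) /=; rewrite !NN_const => hmsg.
set P := \prod_(v in _ :\ l) _.
have P0 : 0 <= P by apply: prodr_ge0 => v _; apply: NN_ge0.
rewrite !(normrM c) -mulrDl -mulrDr mulrA; apply: ler_wpM2r => //.
exact: ler_wpM2l.
Qed.
End Tree.

Theorem mainTheorem7 (R : rcfType) (n : nat) (par : 'I_n -> option 'I_n)
  (q : 'I_n -> bool -> R) (alpha : R) (d : nat) (T0 T1 : {set 'I_n}) :
  0 <= alpha -> alpha < 2^-1 ->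
  is_rooted_tree par ->
  cond_probs_open par q ->
  diff_bounded par q alpha ->
  [disjoint T0 & T1] -> #|T0 :|: T1| = d ->
  bn_L1 par q (conjunction R T0 T1)
    <= ((2 - 2 * alpha) / (1 - 2 * alpha)) ^+ (2 * d).
Proof.
move=> ha0 ha1 Htree Hopen Hdiff _ Hd.
pose psi := fun (v : 'I_n) (b : bool) =>
  (if v \in T1 then (b : nat)%:R else 1) * (if v \in T0 then 1 - (b : nat)%:R else 1) : R.
have E : bn_L1 par q (conjunction R T0 T1) = GG par q setT psi 1.
  rewrite /bn_L1 /GG [in RHS](eq_bigl (fun _ => true)); last by move=> S; rewrite subsetT.
  apply: eq_bigr => S _; congr (Num.norm _).
  rewrite /bn_coef /coef; apply: eq_bigr => x _; rewrite mul1r.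
  rewrite /fac; under eq_bigr => v _ do rewrite in_setT.
  rewrite !big_split /= /bn_prob /Pf /conjunction /bn_phiS. rewrite [\prod_(i in T1) _]big_mkcond [\prod_(j in T0) _]big_mkcond [\prod_(v in S) _]big_mkcond /=.
  by rewrite !mulrA.
rewrite E; apply: le_trans (GG_bound ha0 ha1 Htree Hopen Hdiff (erefl _) _ psi 1) _.
  by move=> v p _ _; rewrite in_setT.
rewrite normr1 mul1r.
set t := tt alpha.
have t0 : 0 < t by apply: tt_gt0.
apply: le_trans (_ : \prod_(v in setT) (if v \in T0 :|: T1 then 1 + t else 1) <= _).
  apply: ler_prod => v _; rewrite NN_ge0 //= /NN /psi in_setU -/t.
  case: (v \in T1); case: (v \in T0) => /=; rewrite ?mulr1n ?mulr0n ?mul0r ?mulr0 ?mul1r ?mulr1 ?subr0 ?subrr ?sub0r ?normr0 ?normrN ?normr1 ?maxxx /=; rewrite ?(max_l (@ler01 R)) ?(max_r (@ler01 R)); lra.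
have -> : \prod_(v in [set: 'I_n]) (if v \in T0 :|: T1 then 1 + t else 1)
    = \prod_(v in T0 :|: T1) (1 + t).
  by rewrite [RHS]big_mkcond [LHS]big_mkcond; apply: eq_bigr => v _; rewrite in_setT.
rewrite prodr_const Hd exprM.
have u0 : 0 < 1 - 2 * alpha by lra.
have h1 : 1 - 2 * alpha != 0 by rewrite gt_eqF.
have h2 : 2 - 4 * alpha != 0 by apply: lt0r_neq0; lra.
have -> : ((2 - 2 * alpha) / (1 - 2 * alpha)) ^+ 2
   = 1 + t + (2 + 3 * (1 - 2 * alpha)) / (2 * (1 - 2 * alpha) ^+ 2).
  by rewrite /t /tt; field; rewrite h1 h2.
have : 0 <= (2 + 3 * (1 - 2 * alpha)) / (2 * (1 - 2 * alpha) ^+ 2).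
  by apply: divr_ge0; [lra | apply: mulr_ge0; [lra | apply: sqr_ge0]].
move=> hge.
apply: (lerXn2r d); rewrite ?nnegrE; lra.
Qed.
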